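(* Let $G$ be a baseline cdf with density $g$, let $\theta>0$, $\lambda\in\mathbb{R}\setminus\{0\}$, and let $0<\alpha_1<\alpha_2$. If $X\sim\mathrm{GMOP\text{-}G}(\theta,\alpha_1,\lambda)$ and $Y\sim\mathrm{GMOP\text{-}G}(\theta,\alpha_2,\lambda)$ (same baseline $G$), then $X\le_{lr}Y$.
   Context: With $\bar\alpha=1-\alpha$, the $\mathrm{GMOP\text{-}G}(\theta,\alpha,\lambda)$ distribution (parameters $\theta>0$, $\alpha>0$, $\lambda\in\mathbb{R}\setminus\{0\}$, baseline cdf $G$ with density $g$) has pdf $$f(t)=\frac{\theta\lambda\alpha^{\theta}(1-e^{-\lambda})g(t)e^{-\lambda G(t)}\left(e^{-\lambda G(t)}-e^{-\lambda}\right)^{\theta-1}}{\left(1-\alpha e^{-\lambda}-\bar\alpha e^{-\lambda G(t)}\right)^{\theta+1}}.$$ For random variables $X$, $Y$ with densities $f_X$, $f_Y$, $X$ is smaller than $Y$ in the likelihood ratio order, $X\le_{lr}Y$, if $f_X(t)/f_Y(t)$ is decreasing in $t$ (on the set where the densities are positive). *)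

(* Defs.v *)
From HB Require Import structures.
From mathcomp Require Import all_boot all_order all_algebra.
From mathcomp Require Import all_classical all_reals all_analysis.
Set Implicit Arguments. Unset Strict Implicit. Unset Printing Implicit Defensive.
Import Order.TTheory GRing.Theory Num.Theory.
Import numFieldNormedType.Exports.
Local Open Scope classical_set_scope.
Local Open Scope ring_scope.

Definition cdf_with_density (R : realType) (G g : R -> R) : Prop :=
  (forall x, 0 <= g x) /\
  measurable_fun setT g /\
  (\int[@lebesgue_measure R]_(x in [set: R]) (g x)%:E = 1)%E /\
  (forall t, ((G t)%:E = \int[@lebesgue_measure R]_(x in `]-oo, t]) (g x)%:E)%E).

(* pdf of GMOP-G(theta, alpha, lambda).  The factors
   (e^{-lG}-e^{-l})^{theta-1} / (1 - a e^{-l} - (1-a) e^{-lG})^{theta+1}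
   are read as |.|^(theta-1) / |.|^(theta+1). *)
Definition gmop_pdf (R : realType) (G g : R -> R) (theta alpha lambda : R)
    (t : R) : R :=
  let A := expR (- lambda * G t) - expR (- lambda) in
  let D := 1 - alpha * expR (- lambda) - (1 - alpha) * expR (- lambda * G t) in
  theta * lambda * (alpha `^ theta) * (1 - expR (- lambda)) * g t
    * expR (- lambda * G t) * (`|A| `^ (theta - 1))
    / (`|D| `^ (theta + 1)).

Definition lr_le (R : realType) (fX fY : R -> R) : Prop :=
  forall s t, s <= t ->
    0 < fX s -> 0 < fY s -> 0 < fX t -> 0 < fY t ->
    fX t / fY t <= fX s / fY s.

(* Main.v *)
Require Import Defs.
From mathcomp Require Import all_boot all_order all_algebra.
From mathcomp Require Import all_classical all_reals all_analysis.
From mathcomp Require Import measurable_realfun.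
From mathcomp Require Import ring lra.
Import Order.TTheory GRing.Theory Num.Theory.
Local Open Scope ring_scope.

Lemma G_props {R : realType} (G g : R -> R) : cdf_with_density G g ->
  (forall t, 0 <= G t <= 1) /\ (forall s t, s <= t -> G s <= G t).
Proof.
case=> g0 [mg [int1 HG]].
have mgE : forall B : set R, measurable B ->
   measurable_fun B (EFin \o g).
  move=> B mB; apply/measurable_EFinP; exact: measurable_funS mg.
have sub : forall A B : set R, measurable A -> measurable B -> (A `<=` B)%classic ->
  (\int[@lebesgue_measure R]_(x in A) (g x)%:E <= \int[@lebesgue_measure R]_(x in B) (g x)%:E)%E.
  move=> A B mA mB AB; apply: ge0_subset_integral => //.
    exact: (mgE B mB).
  by move=> x _; rewrite lee_fin.
split.
  move=> t; apply/andP; split.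
    rewrite -lee_fin HG; apply: integral_ge0 => x _; rewrite lee_fin.
    exact: g0.
  rewrite -lee_fin HG -int1; apply: sub => //.
- move=> s t st; rewrite -lee_fin !HG; apply: sub => //.
  move=> x /=; rewrite !in_itv /= => xs; exact: le_trans xs st.
Qed.
Section K.
Variable R : realType.
Definition DD (c a u : R) := 1 - a * c - (1 - a) * u.

Lemma key (a1 a2 c us ut : R) : 0 < a1 -> a1 < a2 ->
  (c <= ut /\ ut <= us /\ us <= 1) \/ (1 <= us /\ us <= ut /\ ut <= c) ->
  `|DD c a2 ut| * `|DD c a1 us| <= `|DD c a2 us| * `|DD c a1 ut|.
Proof.
move=> a10 a12 H.
have a20 : 0 < a2 by apply: lt_trans a12.
have id : DD c a2 us * DD c a1 ut - DD c a2 ut * DD c a1 us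
   = (a2 - a1) * (1 - c) * (us - ut) by rewrite /DD; ring.
rewrite -!normrM; case: H => [[h1 [h2 h3]]|[h1 [h2 h3]]].
- have pos : forall a u, 0 < a -> c <= u -> u <= 1 -> 0 <= DD c a u.
    move=> a u a0 cu u1.
    have -> : DD c a u = (1 - u) + a * (u - c) by rewrite /DD; ring.
    by apply: addr_ge0; [rewrite subr_ge0|apply: mulr_ge0; rewrite ?subr_ge0 // ltW].
  have ut1 : ut <= 1 by apply: le_trans h3.
  have cus : c <= us by apply: le_trans h2.
  rewrite !ger0_norm; try (apply: mulr_ge0; apply: pos => //).
  rewrite -subr_ge0 id; apply: mulr_ge0; last by rewrite subr_ge0.
  apply: mulr_ge0; lra.
- have neg : forall a u, 0 < a -> 1 <= u -> u <= c -> DD c a u <= 0.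
    move=> a u a0 cu u1.
    have -> : DD c a u = - ((u - 1) + a * (c - u)) by rewrite /DD; ring.
    rewrite oppr_le0.
    by apply: addr_ge0; [rewrite subr_ge0|apply: mulr_ge0; rewrite ?subr_ge0 // ltW].
  have ut1 : 1 <= ut by apply: le_trans h2.
  have cus : us <= c by apply: le_trans h3.
  rewrite !ger0_norm; try (apply: mulr_le0; apply: neg => //).
  rewrite -subr_ge0 id.
  have -> : (a2 - a1) * (1 - c) * (us - ut) = (a2 - a1) * (c - 1) * (ut - us) by ring.
  apply: mulr_ge0; last by rewrite subr_ge0.
  apply: mulr_ge0; lra.
Qed.
End K.
Arguments DD {R}.
Arguments key {R}.

Section Aux.
Variable R : realType.
Lemma L1 (l a : R) : l < 0 -> 0 <= a -> 0 <= - l * a. Proof. move=> *; nra. Qed.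
Lemma L2 (l a b : R) : l < 0 -> a <= b -> - l * a <= - l * b. Proof. move=> *; nra. Qed.
Lemma L3 (l a : R) : l < 0 -> a <= 1 -> - l * a <= - l. Proof. move=> *; nra. Qed.
Lemma L4 (l a : R) : 0 < l -> a <= 1 -> - l <= - l * a. Proof. move=> *; nra. Qed.
Lemma L5 (l a b : R) : 0 < l -> a <= b -> - l * b <= - l * a. Proof. move=> *; nra. Qed.
Lemma L6 (l a : R) : 0 < l -> 0 <= a -> - l * a <= 0. Proof. move=> *; nra. Qed.
Lemma ratioE (C p1 p2 X1 X2 : R) : C != 0 -> p2 != 0 -> X1 != 0 -> X2 != 0 ->
  C * p1 / X1 / (C * p2 / X2) = p1 / p2 * (X2 / X1).
Proof. by move=> *; field; apply/and4P. Qed.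
Lemma step (p1 p2 d1s d2s d1t d2t r : R) : 0 <= p1 -> 0 < p2 ->
  0 < `|d1s| `^ r -> 0 < `|d1t| `^ r -> 0 <= r ->
  `|d2t| * `|d1s| <= `|d2s| * `|d1t| ->
  p1 / p2 * (`|d2t| `^ r / `|d1t| `^ r) <= p1 / p2 * (`|d2s| `^ r / `|d1s| `^ r).
Proof.
move=> p10 p20 h1 h2 r0 h.
apply: ler_wpM2l; first exact: divr_ge0 p10 (ltW p20).
rewrite ler_pdivrMr // mulrAC ler_pdivlMr //.
rewrite -!powRM ?normr_ge0 //.
by apply: ge0_ler_powR; rewrite ?nnegrE ?mulr_ge0 ?normr_ge0.
Qed.
End Aux.
Arguments ratioE {R}.
Arguments step {R}.

Theorem theorem1 (R : realType) (G g : R -> R) (theta lambda alpha1 alpha2 : R) :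
  cdf_with_density G g ->
  0 < theta -> lambda != 0 -> 0 < alpha1 -> alpha1 < alpha2 ->
  lr_le (gmop_pdf G g theta alpha1 lambda) (gmop_pdf G g theta alpha2 lambda).
Proof.
move=> HG th0 l0 a10 a12 s t st.
have a20 : 0 < alpha2 by apply: lt_trans a12.
have [G01 Gmon] := @G_props R G g HG.
set c := expR (- lambda).
set u := fun x => expR (- lambda * G x).
have K : (c <= u t /\ u t <= u s /\ u s <= 1) \/ (1 <= u s /\ u s <= u t /\ u t <= c).
  have [lp|lp|ln] := ltgtP lambda 0; last by move: l0; rewrite ln eqxx.
  - right.
    have h1 : forall x, 1 <= u x.
      by move=> x; rewrite /u -expR0 ler_expR; apply: L1 => //; case/andP: (G01 x).
    split; first exact: h1.
    split; first by rewrite /u ler_expR; apply: L2 => //; exact: Gmon.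
    by rewrite /u /c ler_expR; apply: L3 => //; case/andP: (G01 t).
  - left.
    split; first by rewrite /u /c ler_expR; apply: L4 => //; case/andP: (G01 t).
    split; first by rewrite /u ler_expR; apply: L5 => //; exact: Gmon.
    by rewrite /u -expR0 ler_expR; apply: L6 => //; case/andP: (G01 s).
set C := fun x => theta * lambda * (1 - c) * g x * u x
   * (`|u x - c| `^ (theta - 1)).
set X := fun a x => `|DD c a (u x)| `^ (theta + 1).
have fE : forall a x, gmop_pdf G g theta a lambda x = C x * a `^ theta / X a x.
  by move=> a x; rewrite /gmop_pdf /C /X /DD /u /c /=; ring.
rewrite !fE.
have nz : forall a x, 0 < C x * a `^ theta / X a x -> C x != 0 /\ 0 < X a x.
  move=> a x h; split.
    by apply/negP => /eqP C0; move: h; rewrite C0 !mul0r ltxx.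
  rewrite lt_def powR_ge0 andbT; apply/negP => /eqP X0.
  by move: h; rewrite X0 invr0 mulr0 ltxx.
move=> /nz [C1s X1s] /nz [_ X2s] /nz [C1t X1t] /nz [_ X2t].
have p2 : alpha2 `^ theta != 0 by rewrite gt_eqF // powR_gt0.
rewrite (ratioE (C t) (alpha1 `^ theta) (alpha2 `^ theta) (X alpha1 t) (X alpha2 t) C1t p2 (negbT (gt_eqF X1t)) (negbT (gt_eqF X2t))).
rewrite (ratioE (C s) (alpha1 `^ theta) (alpha2 `^ theta) (X alpha1 s) (X alpha2 s) C1s p2 (negbT (gt_eqF X1s)) (negbT (gt_eqF X2s))).
exact: (step (alpha1 `^ theta) (alpha2 `^ theta) (DD c alpha1 (u s)) (DD c alpha2 (u s))
   (DD c alpha1 (u t)) (DD c alpha2 (u t)) (theta + 1) (powR_ge0 _ _) (powR_gt0 _ a20)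
   X1s X1t (addr_ge0 (ltW th0) ler01) (key _ _ _ _ _ a10 a12 K)).
Qed.
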